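(* Let $\mathcal H_1=\mathcal H_2=\mathbb C^2$ and let $P_1,P_2$ be orthogonal projectors of rank two on $\mathcal H_2\otimes\mathcal H_1$ with $P_1+P_2=I_2\otimes I_1$. The two-outcome qubit $1$-tester $\{T_1=\frac12P_1,\ T_2=\frac12P_2\}$ is not extremal if and only if at least one of the following holds: (a) $P_1=I_2\otimes|v\rangle\langle v|$ for some unit vector $|v\rangle\in\mathcal H_1$; (b) there are unit vectors $|f\rangle\in\mathcal H_2$, $|e\rangle\in\mathcal H_1$ such that $|f\rangle\otimes|e\rangle\in\operatorname{Supp}(P_1)$ and $|f^\perp\rangle\otimes|e\rangle\in\operatorname{Supp}(P_2)$, where $|f^\perp\rangle$ is a unit vector orthogonal to $|f\rangle$ (equivalently, $P_1=|f\rangle\langle f|\otimes|e\rangle\langle e|+|h\rangle\langle h|\otimes|e^\perp\rangle\langle e^\perp|$ for some unit vectors $|f\rangle,|h\rangle\in\mathcal H_2$, $|e\rangle\in\mathcal H_1$).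
   Context: A quantum $1$-tester with $M$ outcomes is a family of positive operators $\{T_i\}_{i=1}^M$ on $\mathcal H_2\otimes\mathcal H_1$ with $\sum_iT_i=I_2\otimes\rho$ for a density operator $\rho$ on $\mathcal H_1$; extremal means an extreme point of the convex set of all such testers with $M$ outcomes. $\operatorname{Supp}$ denotes the range of a projector. *)

(* Defs.v *)
(* Complex scalars: an arbitrary numClosedFieldType C
   (e.g. algC); qubits H = C^2 represented by column vectors 'cV[C]_2,
   H2 (x) H1 = C^4 represented by 'cV[C]_4, index of e_a (x) e_b is 2*a+b. *)
From HB Require Import structures.
From mathcomp Require Import all_boot all_order all_algebra.
Set Implicit Arguments. Unset Strict Implicit. Unset Printing Implicit Defensive.
Import Order.TTheory GRing.Theory Num.Theory.
Local Open Scope ring_scope.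

Section QDefs.
Variable C : numClosedFieldType.

Definition adjmx m n (A : 'M[C]_(m, n)) : 'M[C]_(n, m) := (map_mx Num.conj A)^T.

(* Kronecker (tensor) product of two qubit operators: A acts on H2, B on H1 *)
Definition kron2 (A B : 'M[C]_2) : 'M[C]_4 :=
  \matrix_(i, j) (A (inord (i %/ 2)) (inord (j %/ 2)) * B (inord (i %% 2)) (inord (j %% 2))).

Definition kronv (f e : 'cV[C]_2) : 'cV[C]_4 :=
  \col_i (f (inord (i %/ 2)) 0 * e (inord (i %% 2)) 0).

Definition psd n (A : 'M[C]_n) : Prop :=
  A = adjmx A /\ forall x : 'cV[C]_n, 0 <= (adjmx x *m A *m x) 0 0.

Definition density n (rho : 'M[C]_n) : Prop := psd rho /\ \tr rho = 1.

Definition tester M (T : 'I_M -> 'M[C]_4) : Prop :=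
  (forall i, psd (T i)) /\
  exists rho : 'M[C]_2, density rho /\ \sum_(i < M) T i = kron2 1%:M rho.

Definition extremal M (T : 'I_M -> 'M[C]_4) : Prop :=
  tester T /\
  forall (S U : 'I_M -> 'M[C]_4) (t : C),
    tester S -> tester U -> 0 < t < 1 ->
    (forall i, T i = t *: S i + (1 - t) *: U i) ->
    forall i, S i = T i /\ U i = T i.

Definition orthoproj n (P : 'M[C]_n) : Prop := P = adjmx P /\ P *m P = P.

Definition in_supp n (P : 'M[C]_n) (x : 'cV[C]_n) : Prop := exists y, P *m y = x.

Definition unitv n (v : 'cV[C]_n) : Prop := (adjmx v *m v) 0 0 = 1.
Definition orthv n (u v : 'cV[C]_n) : Prop := (adjmx u *m v) 0 0 = 0.

Definition ketbra n (v : 'cV[C]_n) : 'M[C]_n := v *m adjmx v.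

(* the two-outcome tester {P1/2, P2/2}: outcome 1 = ord0, outcome 2 = ord 1 *)
Definition halfTester (P1 P2 : 'M[C]_4) : 'I_2 -> 'M[C]_4 :=
  fun i => if val i == 0%N then 2^-1 *: P1 else 2^-1 *: P2.

End QDefs.

(* Main.v *)
Require Import Defs.
From HB Require Import structures.
From mathcomp Require Import all_boot all_order all_algebra.
From Stdlib Require Import Classical.
Set Implicit Arguments. Unset Strict Implicit. Unset Printing Implicit Defensive.
Import Order.TTheory GRing.Theory Num.Theory.
Local Open Scope ring_scope.

Section Gen.
Variable C : numClosedFieldType.
Implicit Types (m n p : nat).

Lemma conjN (x : C) : (- x)^* = - x^*. Proof. exact: rmorphN. Qed.
Lemma conjD (x y : C) : (x + y)^* = x^* + y^*. Proof. exact: rmorphD. Qed.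
Lemma conjB (x y : C) : (x - y)^* = x^* - y^*. Proof. exact: rmorphB. Qed.
Lemma conjM (x y : C) : (x * y)^* = x^* * y^*. Proof. exact: rmorphM. Qed.
Lemma conjV (x : C) : (x^-1)^* = (x^*)^-1. Proof. exact: fmorphV. Qed.

Lemma adjmxE m n (A : 'M[C]_(m, n)) i j : adjmx A i j = (A j i)^*.
Proof. by rewrite /adjmx !mxE. Qed.

Lemma adjmxK m n (A : 'M[C]_(m, n)) : adjmx (adjmx A) = A.
Proof. by apply/matrixP => i j; rewrite !adjmxE conjCK. Qed.

Lemma adjmxM m n p (A : 'M[C]_(m, n)) (B : 'M[C]_(n, p)) :
  adjmx (A *m B) = adjmx B *m adjmx A.
Proof. by rewrite /adjmx map_mxM trmx_mul. Qed.

Lemma adjmxD m n (A B : 'M[C]_(m, n)) : adjmx (A + B) = adjmx A + adjmx B.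
Proof. by apply/matrixP => i j; rewrite !mxE rmorphD. Qed.

Lemma adjmxN m n (A : 'M[C]_(m, n)) : adjmx (- A) = - adjmx A.
Proof. by apply/matrixP => i j; rewrite !mxE conjN. Qed.

Lemma adjmxB m n (A B : 'M[C]_(m, n)) : adjmx (A - B) = adjmx A - adjmx B.
Proof. by rewrite adjmxD adjmxN. Qed.

Lemma adjmxZ m n (c : C) (A : 'M[C]_(m, n)) : adjmx (c *: A) = c^* *: adjmx A.
Proof. by apply/matrixP => i j; rewrite !mxE rmorphM. Qed.

Lemma adjmx1 n : adjmx (1%:M : 'M[C]_n) = 1%:M.
Proof. by apply/matrixP => i j; rewrite !mxE eq_sym conjC_nat. Qed.

Lemma adjmx0 m n : adjmx (0 : 'M[C]_(m, n)) = 0.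
Proof. by apply/matrixP => i j; rewrite !mxE rmorph0. Qed.

Lemma normsq_ge0 n (v : 'cV[C]_n) : 0 <= (adjmx v *m v) 0 0.
Proof.
rewrite mxE; apply: sumr_ge0 => i _; rewrite adjmxE mulrC; exact: mul_conjC_ge0.
Qed.

Lemma normsq_eq0 n (v : 'cV[C]_n) : (adjmx v *m v) 0 0 = 0 -> v = 0.
Proof.
rewrite mxE => H; apply/matrixP => i j; rewrite (ord1 j) mxE.
have Hge : forall k : 'I_n, xpredT k -> 0 <= adjmx v 0 k * v k 0.
  by move=> k _; rewrite adjmxE mulrC; exact: mul_conjC_ge0.
have := psumr_eq0P Hge H (i := i) isT.
by rewrite adjmxE mulrC => /eqP; rewrite mul_conjC_eq0 => /eqP.
Qed.

Definition form n (x : 'cV[C]_n) (A : 'M[C]_n) (y : 'cV[C]_n) :=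
  (adjmx x *m A *m y) 0 0.

Lemma form_conj n (x y : 'cV[C]_n) A : (form x A y)^* = form y (adjmx A) x.
Proof. by rewrite /form -adjmxE !adjmxM adjmxK mulmxA. Qed.

Lemma formDl n (x1 x2 y : 'cV[C]_n) A : form (x1 + x2) A y = form x1 A y + form x2 A y.
Proof. by rewrite /form adjmxD !mulmxDl mxE. Qed.

Lemma formDr n (x y1 y2 : 'cV[C]_n) A : form x A (y1 + y2) = form x A y1 + form x A y2.
Proof. by rewrite /form !mulmxDr mxE. Qed.

Lemma formZl n (c : C) (x y : 'cV[C]_n) A : form (c *: x) A y = c^* * form x A y.
Proof. by rewrite /form adjmxZ -!scalemxAl mxE. Qed.

Lemma formZr n (c : C) (x y : 'cV[C]_n) A : form x A (c *: y) = c * form x A y.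
Proof. by rewrite /form -scalemxAr mxE. Qed.

Lemma form_delta n (k : 'I_n) (A : 'M[C]_n) x : form (delta_mx k 0) A x = (A *m x) k 0.
Proof.
rewrite /form -mulmxA mxE (bigD1 k) //= big1 ?addr0.
  by rewrite adjmxE mxE !eqxx conjC1 mul1r.
by move=> j /negPf Hj; rewrite adjmxE mxE Hj conjC0 mul0r.
Qed.

Lemma alg1 (R : comNzRingType) (a c b : R) :
  (b+1)*(-a*c) + (-c*((b+1)*a) + -c*(-a*b)) = -(a*c*(b+2)).
Proof.
rewrite !mulNr !mulrN opprK (mulrCA c) (mulrA c a b) (mulrC c a) (mulrC _ (a*c)).
set p := a * c.
rewrite -mulrN -mulrN -!mulrDr; congr (p * _).
rewrite [- (b+1) + b]addrC opprD addNKr -opprD.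
by rewrite -opprD -addrA.
Qed.

Lemma psd_ker n (A : 'M[C]_n) x : psd A -> form x A x = 0 -> A *m x = 0.
Proof.
move=> [HA Hpos] Hx; apply/matrixP => k l; rewrite (ord1 l) [RHS]mxE.
set y : 'cV[C]_n := delta_mx k 0.
set a := form y A x.
have Ha : a = (A *m x) k 0 by rewrite /a form_delta.
set b := form y A y.
have Hb : 0 <= b by exact: Hpos.
have Hxy : form x A y = a^* by rewrite /a form_conj -HA.
set al := b + 1.
have Hal : al^* = al.
  by apply: conj_Creal; rewrite /al rpredD ?rpred1 // ger0_real.
set v := al *: x + (- a) *: y.
have Hv := Hpos v.
have E : (adjmx v *m A *m v) 0 0 = - (a * a^* * (b + 2)).
  rewrite -/(form v A v) /v !formDl !formDr !formZl !formZr Hx Hxy -/a -/b Hal.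
  by rewrite conjN !mulr0 add0r /al alg1.
rewrite E oppr_ge0 in Hv.
have Hq : 0 <= a * a^* * (b + 2).
  by apply: mulr_ge0; [exact: mul_conjC_ge0 | apply: addr_ge0].
have H0 : a * a^* * (b + 2) = 0 by apply/le_anti; rewrite Hv Hq.
have Hb2 : b + 2 != 0.
  by rewrite gt_eqF // ltr_wpDl.
move/eqP: H0; rewrite mulf_eq0 (negPf Hb2) orbF mul_conjC_eq0 => /eqP.
by rewrite -Ha.
Qed.


Lemma formAD n (x y : 'cV[C]_n) A B : form x (A + B) y = form x A y + form x B y.
Proof. by rewrite /form mulmxDr mulmxDl mxE. Qed.

Lemma formAZ n (c : C) (x y : 'cV[C]_n) A : form x (c *: A) y = c * form x A y.
Proof. by rewrite /form -scalemxAr -scalemxAl mxE. Qed.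

Lemma col_entry m n (M : 'M[C]_(m, n)) i j : M i j = (M *m (delta_mx j (0 : 'I_1))) i 0.
Proof.
rewrite mxE (bigD1 j) //= big1 ?addr0; first by rewrite mxE !eqxx mulr1.
by move=> k /negPf Hk; rewrite mxE Hk mulr0.
Qed.

Lemma mx_cols0 m n (M : 'M[C]_(m, n)) : (forall j, M *m (delta_mx j (0 : 'I_1)) = 0) -> M = 0.
Proof. by move=> H; apply/matrixP => i j; rewrite col_entry H !mxE. Qed.

Lemma orthoproj_psd n (P : 'M[C]_n) : orthoproj P -> psd P.
Proof.
move=> [HP HPP]; split => // x.
have -> : adjmx x *m P *m x = adjmx (P *m x) *m (P *m x).
  by rewrite adjmxM -HP -!mulmxA [P *m (P *m x)]mulmxA HPP.
exact: normsq_ge0.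
Qed.

Lemma psdZ n (c : C) (A : 'M[C]_n) : 0 <= c -> psd A -> psd (c *: A).
Proof.
move=> Hc [HA Hp]; split.
  by rewrite adjmxZ -HA conj_Creal // ger0_real.
by move=> x; rewrite -/(form x _ x) formAZ; apply: mulr_ge0 => //; exact: Hp.
Qed.

Lemma supp_le n (S U P : 'M[C]_n) (t c : C) :
  psd S -> psd U -> 0 < t < 1 -> orthoproj P ->
  c *: P = t *: S + (1 - t) *: U -> S = P *m S *m P.
Proof.
move=> HS HU /andP[Ht0 Ht1] [HP HPP] E.
have HSP : S *m (1%:M - P) = 0.
  apply: mx_cols0 => j; set x := (1%:M - P) *m (delta_mx j (0 : 'I_1)).
  have HPx : P *m x = 0 by rewrite /x mulmxA mulmxBr HPP mulmx1 subrr mul0mx.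
  have H0 : form x (c *: P) x = 0.
    by rewrite formAZ /form -mulmxA HPx mulmx0 mxE mulr0.
  rewrite E formAD !formAZ in H0.
  have HSx : 0 <= form x S x by case: HS => _; apply.
  have HUx : 0 <= form x U x by case: HU => _; apply.
  have Ht1' : 0 <= 1 - t by rewrite subr_ge0 ltW.
  have A1 : 0 <= t * form x S x by rewrite mulr_ge0 // ltW.
  have A2 : 0 <= (1 - t) * form x U x by rewrite mulr_ge0.
  move/eqP: H0; rewrite paddr_eq0 // => /andP[/eqP H1 _].
  move/eqP: H1; rewrite mulf_eq0 (gt_eqF Ht0) /= => /eqP H1.
  by rewrite -mulmxA psd_ker.
have E1 : S = S *m P by move/eqP: HSP; rewrite mulmxBr mulmx1 subr_eq0 => /eqP.
have E2 : S = P *m S.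
  by case: HS => HS _; rewrite HS {1}E1 adjmxM -HP -HS.
by rewrite -E2.
Qed.

Lemma trace_rank n (P : 'M[C]_n) : P *m P = P -> \tr P = (\rank P)%:R.
Proof.
move=> HPP.
have HP := mulmx_base P.
have [B HB] := row_fullP (col_base_full P).
move: HP HB (row_base_free P); move: (col_base P) (row_base P) => Cb Rb HP HB HRb.
have H1 : Rb *m Cb *m Rb = 1%:M *m Rb.
  have E : Rb *m Cb *m Rb = B *m (Cb *m Rb *m (Cb *m Rb)).
    by rewrite !mulmxA HB mul1mx.
  have HPP' : Cb *m Rb *m (Cb *m Rb) = Cb *m Rb by rewrite HP HPP.
  by rewrite E HPP' mulmxA HB !mul1mx.
have H2 := row_free_inj HRb H1.
by rewrite -{1}HP mxtrace_mulC H2 mxtrace1.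
Qed.

Lemma herm_idem_tr0 n (X : 'M[C]_n) : X = adjmx X -> X *m X = X -> \tr X = 0 -> X = 0.
Proof.
move=> HX HXX Htr; apply: mx_cols0 => j.
have Hd : forall k, X k k = (adjmx (X *m (delta_mx k (0 : 'I_1))) *m (X *m (delta_mx k (0 : 'I_1)))) 0 0.
  move=> k; rewrite col_entry -form_delta /form adjmxM -HX.
  by rewrite -!mulmxA [X *m (X *m _)]mulmxA HXX.
have Hge : forall k : 'I_n, xpredT k -> 0 <= X k k by move=> k _; rewrite Hd normsq_ge0.
have := psumr_eq0P Hge Htr (i := j) isT.
by rewrite Hd => /normsq_eq0.
Qed.

Notation o20 := (@Ordinal 2 0 isT).
Notation o21 := (@Ordinal 2 1 isT).

Lemma ord2P (i : 'I_2) : i = o20 \/ i = o21.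
Proof.
by case: i => [[|[|k]] Hk]; [left|right|by []]; apply: ord_inj.
Qed.

Lemma sum2 (F : 'I_2 -> C) : \sum_(i < 2) F i = F o20 + F o21.
Proof.
by rewrite big_ord_recl big_ord1; congr (F _ + F _); apply: ord_inj.
Qed.

Lemma inord0E : (inord 0 : 'I_2) = o20.
Proof. by apply: ord_inj; rewrite /= inordK. Qed.
Lemma inord1E : (inord 1 : 'I_2) = o21.
Proof. by apply: ord_inj; rewrite /= inordK. Qed.

Definition perp (e : 'cV[C]_2) : 'cV[C]_2 :=
  \col_(i < 2) (if val i == 0%N then - (e o21 0)^* else (e o20 0)^*).

Lemma dot2 (u v : 'cV[C]_2) : (adjmx u *m v) 0 0 = (u o20 0)^* * v o20 0 + (u o21 0)^* * v o21 0.
Proof. by rewrite mxE sum2 !adjmxE. Qed.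

Lemma perp_unit e : unitv e -> unitv (perp e).
Proof.
rewrite /unitv !dot2 !mxE /= conjN !conjCK mulrNN => <-.
by rewrite addrC mulrC [X in _ + X]mulrC.
Qed.

Lemma perp_orth e : orthv e (perp e).
Proof.
by rewrite /orthv dot2 !mxE /= mulrN mulrC addNr.
Qed.

Lemma ketbraE (v : 'cV[C]_2) i j : ketbra v i j = v i 0 * (v j 0)^*.
Proof. by rewrite /ketbra mxE big_ord1 adjmxE. Qed.

Lemma ketbra_perp e : unitv e -> ketbra e + ketbra (perp e) = 1%:M.
Proof.
rewrite /unitv dot2 => He; apply/matrixP => i j.
rewrite (_ : (ketbra e + ketbra (perp e)) i j = ketbra e i j + ketbra (perp e) i j); last by rewrite mxE.
rewrite !ketbraE !mxE.
case: (ord2P i) => ->; case: (ord2P j) => -> /=; rewrite ?conjN ?conjCK.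
- by rewrite mulrNN -He mulrC [X in _ + X]mulrC.
- by rewrite mulNr mulrC subrr.
- by rewrite mulrN mulrC subrr.
- by rewrite -He addrC mulrC [X in _ + X]mulrC.
Qed.

Lemma ketbra_apply n (v w : 'cV[C]_n) : ketbra v *m w = ((adjmx v *m w) 0 0) *: v.
Proof. by rewrite /ketbra -mulmxA {1}[adjmx v *m w]mx11_scalar mul_mx_scalar. Qed.

Lemma ketbraZ n (c : C) (v : 'cV[C]_n) : ketbra (c *: v) = (c * c^*) *: ketbra v.
Proof. by rewrite /ketbra adjmxZ -scalemxAl -scalemxAr scalerA. Qed.

Lemma dotZ n (c : C) (u v : 'cV[C]_n) : (adjmx (c *: u) *m v) 0 0 = c^* * (adjmx u *m v) 0 0.
Proof. by rewrite adjmxZ -scalemxAl mxE. Qed.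

Lemma dotZr n (c : C) (u v : 'cV[C]_n) : (adjmx u *m (c *: v)) 0 0 = c * (adjmx u *m v) 0 0.
Proof. by rewrite -scalemxAr mxE. Qed.

Lemma ketbra_compl (f fp : 'cV[C]_2) : unitv f -> unitv fp -> orthv f fp -> ketbra f + ketbra fp = 1%:M.
Proof.
move=> Hf Hfp Ho.
have E := ketbra_perp Hf.
set g := perp f in E.
have Hfp' : fp = ((adjmx g *m fp) 0 0) *: g.
  by rewrite -ketbra_apply -[LHS]mul1mx -E mulmxDl !ketbra_apply Ho scale0r add0r.
have Hg : unitv g := perp_unit Hf.
move: Hfp'; set c := (adjmx g *m fp) 0 0 => Hfp'.
move: Hfp; rewrite /unitv Hfp' dotZ dotZr Hg mulr1 => Hc.
by rewrite ketbraZ mulrC Hc scale1r.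
Qed.

Lemma diag_normsq n (X : 'M[C]_n) k : X = adjmx X -> X *m X = X ->
  X k k = (adjmx (X *m (delta_mx k (0 : 'I_1))) *m (X *m (delta_mx k (0 : 'I_1)))) 0 0.
Proof.
move=> HX HXX; rewrite col_entry -form_delta /form adjmxM -HX.
by rewrite -!mulmxA [X *m (X *m _)]mulmxA HXX.
Qed.

Lemma unit_neq0 n (v : 'cV[C]_n) : unitv v -> v != 0.
Proof. by move=> Hv; apply/eqP => H; move: Hv; rewrite /unitv H mulmx0 mxE => /eqP; rewrite eq_sym oner_eq0. Qed.


Lemma rank1 (M : 'M[C]_2) : M = adjmx M -> M *m M = M -> M != 0 -> M != 1%:M ->
  exists f, unitv f /\ M *m f = f /\ M *m perp f = 0.
Proof.
move=> HM HMM Hn0 Hn1.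
have [j Hj] : exists j, M j j != 0.
  case: (boolP (M o20 o20 == 0)) => H0; last by exists o20.
  case: (boolP (M o21 o21 == 0)) => H1; last by exists o21.
  by move: Hn0; rewrite (herm_idem_tr0 HM HMM) ?eqxx // /mxtrace sum2 (eqP H0) (eqP H1) addr0.
set m := M *m (delta_mx j (0 : 'I_1)).
have Hd := diag_normsq j HM HMM; rewrite -/m in Hd.
set d := M j j in Hj Hd.
have Hd0 : 0 <= d by rewrite Hd normsq_ge0.
set s := sqrtC d.
have Hs : s^* = s by apply: conj_Creal; apply: sqrtC_real.
have Hs0 : s != 0 by rewrite sqrtC_eq0.
have Hss : s * s = d by rewrite -expr2 sqrtCK.
set f := s^-1 *: m.
have Hf : unitv f.
  rewrite /unitv /f dotZ dotZr -Hd conjV Hs mulrA -invfM Hss mulVf //.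
have HMm : M *m m = m by rewrite /m mulmxA HMM.
have HMf : M *m f = f by rewrite /f -scalemxAr HMm.
exists f; split => //; split => //.
set g := perp f.
have Hg : unitv g := perp_unit Hf.
have Hfg : orthv f g := perp_orth f.
set y := M *m g.
have Hfy : (adjmx f *m y) 0 0 = 0.
  by rewrite /y mulmxA {1}HM -adjmxM HMf.
set c := (adjmx g *m y) 0 0.
have Hy : y = c *: g.
  by rewrite -ketbra_apply -[LHS]mul1mx -(ketbra_perp Hf) -/g mulmxDl !ketbra_apply Hfy scale0r add0r.
have HMy : M *m y = y by rewrite /y mulmxA HMM.
have Hc : c * c = c.
  move: HMy; rewrite {1}Hy -scalemxAr -/y Hy scalerA => /eqP.
  rewrite -subr_eq0 -scalerBl scaler_eq0 (negPf (unit_neq0 Hg)) orbF subr_eq0.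
  by move/eqP.
have : c * (c - 1) == 0 by rewrite mulrBr mulr1 Hc subrr.
rewrite mulf_eq0 subr_eq0 => /orP[/eqP c0 | /eqP c1].
  by rewrite -/y Hy c0 scale0r.
move/negP: Hn1; case; apply/eqP.
rewrite -[M]mulmx1 -(ketbra_perp Hf) -/g mulmxDr /ketbra !mulmxA HMf -/y Hy c1 scale1r.
by [].
Qed.

Lemma gram_diag n (X : 'M[C]_n) k :
  (adjmx X *m X) k k = (adjmx (X *m (delta_mx k (0 : 'I_1))) *m (X *m (delta_mx k (0 : 'I_1)))) 0 0.
Proof. by rewrite col_entry -form_delta /form adjmxM -!mulmxA. Qed.

Lemma proj1_ketbra (Q : 'M[C]_2) : Q = adjmx Q -> Q *m Q = Q -> \tr Q = 1 ->
  exists e, unitv e /\ Q = ketbra e.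
Proof.
move=> HQ HQQ Htr.
have Hn0 : Q != 0 by apply/eqP => H; move: Htr; rewrite H linear0 => /eqP; rewrite eq_sym oner_eq0.
have Hn1 : Q != 1%:M.
  by apply/eqP => H; move: Htr; rewrite H mxtrace1 => /eqP; rewrite pnatr_eq1.
have [f [Hf [HQf HQg]]] := rank1 HQ HQQ Hn0 Hn1.
exists f; split => //.
by rewrite -[Q]mulmx1 -(ketbra_perp Hf) mulmxDr /ketbra !mulmxA HQf HQg mul0mx addr0.
Qed.

Lemma herm_traceless (s : 'M[C]_2) : s = adjmx s -> \tr s = 0 -> s != 0 ->
  exists e (c d : C), unitv e /\ ketbra e = c *: s + d *: 1%:M.
Proof.
move=> Hs Htr Hn0.
have Htr' : s o21 o21 = - s o20 o20.
  by apply/eqP; rewrite -addr_eq0 addrC; move: Htr; rewrite /mxtrace sum2 => ->.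
set mu := (s *m s) o20 o20.
have Hss : s *m s = mu%:M.
  apply/matrixP => i j; rewrite /mu !mxE !sum2.
  case: (ord2P i) => ->; case: (ord2P j) => -> /=; rewrite ?mulr1n ?mulr0n ?Htr'.
  - by [].
  - by rewrite mulrN mulrC addrN.
  - by rewrite mulNr mulrC addrN.
  - by rewrite mulrNN addrC [s o21 o20 * _]mulrC.
have Hgram : s *m s = adjmx s *m s by rewrite -Hs.
have Hmu0 : 0 <= mu by rewrite /mu Hgram gram_diag normsq_ge0.
have Hmu_ne : mu != 0.
  apply/eqP => H0; move/negP: Hn0; apply; apply/eqP; apply: mx_cols0 => j.
  by apply: normsq_eq0; rewrite -gram_diag -Hgram Hss mxE eqxx mulr1n.
have Hmu : 0 < mu by rewrite lt_def Hmu_ne Hmu0.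
set l := sqrtC mu.
have Hl : l^* = l by apply: conj_Creal; apply: sqrtC_real; apply: ltW.
have Hl0 : 0 < l by rewrite sqrtC_gt0.
have Hll : l * l = mu by rewrite -expr2 sqrtCK.
have H2l : l + l != 0 by rewrite gt_eqF // addr_gt0.
set X := s + l *: 1%:M.
have HXX : X *m X = (l + l) *: X.
  rewrite /X mulmxDl !mulmxDr Hss -!scalemxAl -!scalemxAr !mulmx1 !mul1mx scalerA Hll.
  by rewrite scalerDl !scalerDr scalerA Hll -scalemx1 [mu *: _ + _]addrC.
set c := (l + l)^-1.
have Hc : c * (l + l) = 1 by rewrite mulVf.
set Q := c *: X.
have HQ : Q = adjmx Q.
  by rewrite /Q /X adjmxZ adjmxD adjmxZ adjmx1 -Hs /c conjV conjD Hl.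
have HQQ : Q *m Q = Q.
  by rewrite /Q -scalemxAl -scalemxAr HXX !scalerA -mulrA Hc mulr1.
have HtrQ : \tr Q = 1.
  by rewrite /Q /X mxtraceZ mxtraceD mxtraceZ mxtrace1 Htr add0r mulr_natr mulr2n.
have [e [He HeQ]] := proj1_ketbra HQ HQQ HtrQ.
exists e, c, (c * l); split => //.
by rewrite -HeQ /Q /X scalerDr scalerA.
Qed.

Notation o40 := (@Ordinal 4 0 isT).
Notation o41 := (@Ordinal 4 1 isT).
Notation o42 := (@Ordinal 4 2 isT).
Notation o43 := (@Ordinal 4 3 isT).

Lemma ord4P (i : 'I_4) : [\/ i = o40, i = o41, i = o42 | i = o43].
Proof.
case: i => [[|[|[|[|k]]]] Hk] //.
- by apply: Or41; apply: ord_inj.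
- by apply: Or42; apply: ord_inj.
- by apply: Or43; apply: ord_inj.
- by apply: Or44; apply: ord_inj.
Qed.

Lemma sum4 (F : 'I_4 -> C) : \sum_(i < 4) F i = F o40 + F o41 + F o42 + F o43.
Proof.
rewrite !big_ord_recr big_ord0 /= add0r.
by congr (F _ + F _ + F _ + F _); apply: ord_inj.
Qed.

Lemma d0 : (0 %/ 2 = 0)%N. Proof. by []. Qed.
Lemma d1 : (1 %/ 2 = 0)%N. Proof. by []. Qed.
Lemma d2 : (2 %/ 2 = 1)%N. Proof. by []. Qed.
Lemma d3 : (3 %/ 2 = 1)%N. Proof. by []. Qed.
Lemma r0 : (0 %% 2 = 0)%N. Proof. by []. Qed.
Lemma r1 : (1 %% 2 = 1)%N. Proof. by []. Qed.
Lemma r2 : (2 %% 2 = 0)%N. Proof. by []. Qed.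
Lemma r3 : (3 %% 2 = 1)%N. Proof. by []. Qed.

Ltac nrm := rewrite /= ?d0 ?d1 ?d2 ?d3 ?r0 ?r1 ?r2 ?r3 ?inord0E ?inord1E /=;
  rewrite ?mulr1n ?mulr0n ?mulr1 ?mulr0 ?mul1r ?mul0r ?conjC0 ?conjC1;
  rewrite ?mulr1 ?mulr0 ?mul1r ?mul0r ?addr0 ?add0r.

Ltac cases4 i := case: (ord4P i) => ->.
Ltac cases2 i := case: (ord2P i) => ->.

Lemma kron2_11 : kron2 (1%:M : 'M[C]_2) 1%:M = 1%:M.
Proof.
apply/matrixP => i j; rewrite !mxE.
by cases4 i; cases4 j; nrm.
Qed.

Lemma kron2D (A B B' : 'M[C]_2) : kron2 A (B + B') = kron2 A B + kron2 A B'.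
Proof. by apply/matrixP => i j; rewrite !mxE mulrDr. Qed.

Lemma kron2Z (A B : 'M[C]_2) c : kron2 A (c *: B) = c *: kron2 A B.
Proof. by apply/matrixP => i j; rewrite !mxE mulrCA. Qed.

Lemma kron2N (A B : 'M[C]_2) : kron2 A (- B) = - kron2 A B.
Proof. by apply/matrixP => i j; rewrite !mxE mulrN. Qed.

Lemma kron2B (A B B' : 'M[C]_2) : kron2 A (B - B') = kron2 A B - kron2 A B'.
Proof. by rewrite kron2D kron2N. Qed.

Definition Kmx (e : 'cV[C]_2) : 'M[C]_(4, 2) :=
  \matrix_(i < 4, j < 2) ((inord (i %/ 2) == j)%:R * e (inord (i %% 2)) 0).

Lemma Kmx_apply e f : Kmx e *m f = kronv f e.
Proof.
apply/matrixP => i j; rewrite (ord1 j) !mxE sum2 !mxE.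
by cases4 i; nrm; apply: mulrC.
Qed.

Lemma Kmx_iso e : unitv e -> adjmx (Kmx e) *m Kmx e = 1%:M.
Proof.
rewrite /unitv dot2 => He.
apply/matrixP => i j; rewrite !mxE sum4 !adjmxE !mxE.
by cases2 i; cases2 j; nrm.
Qed.

Lemma Kmx_proj e : Kmx e *m adjmx (Kmx e) = kron2 1%:M (ketbra e).
Proof.
apply/matrixP => i j; rewrite !mxE sum2 !adjmxE !mxE.
by cases4 i; cases4 j; nrm; rewrite ?big_ord1 ?adjmxE.
Qed.

Lemma sum2M (F : 'I_2 -> 'M[C]_4) : \sum_(i < 2) F i = F o20 + F o21.
Proof. by rewrite big_ord_recl big_ord1; congr (F _ + F _); apply: ord_inj. Qed.

Lemma orthoprojM n (A B : 'M[C]_n) : orthoproj A -> orthoproj B -> A *m B = B *m A ->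
  orthoproj (A *m B).
Proof.
move=> [HA HAA] [HB HBB] HAB; split.
  by rewrite adjmxM -HA -HB HAB.
by rewrite mulmxA -[A *m B *m A]mulmxA -HAB mulmxA HAA -mulmxA HBB.
Qed.

Lemma orthoprojC n (A : 'M[C]_n) : orthoproj A -> orthoproj (1%:M - A).
Proof.
move=> [HA HAA]; split; first by rewrite adjmxB adjmx1 -HA.
by rewrite mulmxBl mul1mx mulmxBr mulmx1 HAA subrr subr0.
Qed.

Lemma orthoproj1 n : orthoproj (1%:M : 'M[C]_n).
Proof. by split; rewrite ?adjmx1 ?mulmx1. Qed.

Lemma E_facts e : unitv e ->
  let E := kron2 1%:M (ketbra e) in
  [/\ orthoproj E, E *m Kmx e = Kmx e & \tr E = 2%:R].
Proof.
move=> He /=; rewrite -Kmx_proj; have HK := Kmx_iso He; split.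
- split; first by rewrite adjmxM adjmxK.
  by rewrite mulmxA -[Kmx e *m _ *m Kmx e]mulmxA HK mulmx1.
- by rewrite -mulmxA HK mulmx1.
- by rewrite mxtrace_mulC HK mxtrace1.
Qed.

Lemma ketbra_orthoproj (e : 'cV[C]_2) : unitv e -> orthoproj (ketbra e).
Proof.
move=> He; split; first by rewrite /ketbra adjmxM adjmxK.
rewrite /ketbra mulmxA -[e *m _ *m e]mulmxA [adjmx e *m e]mx11_scalar He.
by rewrite mulmx1.
Qed.

Lemma tr_ketbra (e : 'cV[C]_2) : unitv e -> \tr (ketbra e) = 1.
Proof. by move=> He; rewrite /ketbra mxtrace_mulC /mxtrace big_ord1. Qed.

Lemma half_lt : (0 : C) < (2 : C)^-1 < 1.
Proof.
apply/andP; split; first by rewrite invr_gt0 ltr0n.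
by rewrite invf_lt1 ?ltr0n // ltr1n.
Qed.

Lemma half_sub : (1 : C) - (2 : C)^-1 = (2 : C)^-1.
Proof.
apply: (@mulfI _ 2); first by rewrite pnatr_eq0.
by rewrite mulrBr mulr1 divff ?pnatr_eq0 // -[2 in LHS]/(1 + 1) addrK.
Qed.

Lemma nonext (P1 P2 : 'M[C]_4) (e : 'cV[C]_2) :
  orthoproj P1 -> orthoproj P2 -> \rank P1 = 2%N -> P1 + P2 = 1%:M -> unitv e ->
  P1 *m kron2 1%:M (ketbra e) = kron2 1%:M (ketbra e) *m P1 ->
  ~ extremal (halfTester P1 P2).
Proof.
move=> HP1 HP2 Hr Hs He Hc [_ Hext].
have [HE HEK HtrE] := E_facts He.
move: Hc HE HEK HtrE; set E := kron2 1%:M (ketbra e) => Hc HE HEK HtrE.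
have HP2e : P2 = 1%:M - P1 by rewrite -Hs addrAC subrr add0r.
have Hc2 : P2 *m E = E *m P2 by rewrite HP2e mulmxBl mulmxBr mul1mx mulmx1 Hc.
have Hc1' : P1 *m (1%:M - E) = (1%:M - E) *m P1.
  by rewrite mulmxBl mulmxBr mul1mx mulmx1 Hc.
have Hc2' : P2 *m (1%:M - E) = (1%:M - E) *m P2.
  by rewrite mulmxBl mulmxBr mul1mx mulmx1 Hc2.
set S := fun i : 'I_2 => if val i == 0%N then P1 *m E else P2 *m E.
set U := fun i : 'I_2 => if val i == 0%N then P1 *m (1%:M - E) else P2 *m (1%:M - E).
have HS : tester S.
  split.
    move=> i; case: (ord2P i) => -> /=; apply: orthoproj_psd; exact: orthoprojM.
  exists (ketbra e); split.
    split; [apply: orthoproj_psd; exact: ketbra_orthoproj | exact: tr_ketbra].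
  by rewrite sum2M /S /= -mulmxDl Hs mul1mx.
have HU : tester U.
  split.
    move=> i; case: (ord2P i) => -> /=; apply: orthoproj_psd;
      apply: orthoprojM => //; exact: orthoprojC.
  exists (1%:M - ketbra e); split.
    split; first by apply: orthoproj_psd; apply: orthoprojC; exact: ketbra_orthoproj.
    by rewrite linearB /= mxtrace1 tr_ketbra // -[2%:R]/(1 + 1 : C) addrK.
  by rewrite sum2M /U /= -mulmxDl Hs mul1mx kron2B kron2_11.
have Hdec : forall i, halfTester P1 P2 i = 2^-1 *: S i + (1 - 2^-1) *: U i.
  move=> i; rewrite half_sub; case: (ord2P i) => -> /=;
    by rewrite -scalerDr -mulmxDr addrC subrK mulmx1.
have [H0 _] := Hext S U 2^-1 HS HU half_lt Hdec o20.
move: H0; rewrite /S /halfTester /= => H0.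
case: HE => _ HEE.
have H1 : P1 *m E = 2^-1 *: (P1 *m E) by rewrite scalemxAl -H0 -mulmxA HEE.
move/eqP: H1; rewrite -subr_eq0 -{1}[P1 *m E]scale1r -scalerBl half_sub scaler_eq0.
rewrite invr_eq0 pnatr_eq0 /= => /eqP H2.
move: H0; rewrite H2 => /esym/eqP; rewrite scaler_eq0 invr_eq0 pnatr_eq0 /= => /eqP HP0.
by move: Hr; rewrite HP0 mxrank0.
Qed.

Lemma proj_eq_tr (P E : 'M[C]_4) : orthoproj P -> orthoproj E -> P *m E = E ->
  \tr P = \tr E -> P = E.
Proof.
move=> [HP HPP] [HE HEE] HPE Htr.
have HEP : E *m P = E by rewrite HE HP -adjmxM HPE -HE.
apply/eqP; rewrite -subr_eq0; apply/eqP; apply: herm_idem_tr0.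
- by rewrite adjmxB -HP -HE.
- by rewrite mulmxBl !mulmxBr HPP HPE HEP HEE subrr subr0.
- by rewrite linearB /= Htr subrr.
Qed.

Lemma proj_eq_tr' (P E : 'M[C]_4) : orthoproj P -> orthoproj E -> P *m E = P ->
  \tr P = \tr E -> P = E.
Proof.
move=> HP HE HPE Htr; symmetry; apply: proj_eq_tr => //.
case: HP => HP _; case: HE => HE _.
by rewrite HE HP -adjmxM HPE -HP.
Qed.

Lemma ab_of_commute (P1 P2 : 'M[C]_4) (e : 'cV[C]_2) :
  orthoproj P1 -> \rank P1 = 2%N -> P1 + P2 = 1%:M -> unitv e ->
  P1 *m kron2 1%:M (ketbra e) = kron2 1%:M (ketbra e) *m P1 ->
  ((exists v : 'cV[C]_2, unitv v /\ P1 = kron2 1%:M (ketbra v)) \/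
    (exists f e fp : 'cV[C]_2,
       unitv f /\ unitv e /\ unitv fp /\ orthv f fp /\
       in_supp P1 (kronv f e) /\ in_supp P2 (kronv fp e))).
Proof.
move=> HP1 Hr Hs He Hc.
have HtrP : \tr P1 = 2%:R by rewrite trace_rank ?Hr //; case: HP1.
have [HE HEK HtrE] := E_facts He.
have HKK := Kmx_iso He.
move: Hc HE HEK HtrE HKK; rewrite -Kmx_proj.
set K := Kmx e => Hc HE HEK HtrE HKK.
case: (HP1) => HP HPP.
set M := adjmx K *m P1 *m K.
have HMh : M = adjmx M by rewrite /M !adjmxM adjmxK -HP mulmxA.
have HMM : M *m M = M.
  rewrite (_ : M *m M = adjmx K *m (P1 *m (K *m adjmx K) *m P1) *m K); last by rewrite /M !mulmxA.
  by rewrite Hc -[K *m adjmx K *m P1 *m P1]mulmxA HPP !mulmxA HKK mul1mx.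
have HKMK : K *m M *m adjmx K = P1 *m (K *m adjmx K).
  rewrite (_ : K *m M *m adjmx K = K *m adjmx K *m P1 *m (K *m adjmx K)); last by rewrite /M !mulmxA.
  by case: (HE) => _ HEE; rewrite -Hc -mulmxA HEE.
have HP1K : forall g : 'cV[C]_2, P1 *m (K *m g) = K *m (M *m g).
  move=> g.
  have -> : P1 *m (K *m g) = P1 *m (K *m adjmx K) *m (K *m g).
    by rewrite -mulmxA [(K *m adjmx K) *m (K *m g)]mulmxA HEK.
  by rewrite Hc /M !mulmxA.
case: (eqVneq M 0) => HM0.
  left; exists (perp e); split; first exact: perp_unit.
  have He' := perp_unit He.
  have [HE' HEK' HtrE'] := E_facts He'.
  have Hsum : K *m adjmx K + kron2 1%:M (ketbra (perp e)) = 1%:M.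
    by rewrite Kmx_proj -kron2D ketbra_perp // kron2_11.
  have HPE0 : P1 *m (K *m adjmx K) = 0 by rewrite -HKMK HM0 mulmx0 mul0mx.
  apply: proj_eq_tr' => //.
    by rewrite -[P1 *m _]add0r -HPE0 -mulmxDr Hsum mulmx1.
  by rewrite HtrE' HtrP.
case: (eqVneq M 1%:M) => HM1.
  left; exists e; split => //.
  rewrite Kmx_proj -Kmx_proj in HKMK *.
  apply: proj_eq_tr => //.
    by rewrite -HKMK HM1 mulmx1.
  by rewrite HtrE HtrP.
right.
have [f [Hf [HMf HMg]]] := rank1 HMh HMM HM0 HM1.
exists f, e, (perp f); split => //; split => //; split; first exact: perp_unit.
split; first exact: perp_orth.
split.
  by exists (kronv f e); rewrite -Kmx_apply HP1K HMf.
exists (kronv (perp f) e); rewrite -Kmx_apply.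
have HP2e : P2 = 1%:M - P1 by rewrite -Hs addrAC subrr add0r.
by rewrite HP2e mulmxBl mul1mx HP1K HMg mulmx0 subr0.
Qed.

Lemma commute_of_b (P1 P2 : 'M[C]_4) (f e fp : 'cV[C]_2) :
  orthoproj P1 -> P1 + P2 = 1%:M ->
  unitv f -> unitv e -> unitv fp -> orthv f fp ->
  in_supp P1 (kronv f e) -> in_supp P2 (kronv fp e) ->
  P1 *m kron2 1%:M (ketbra e) = kron2 1%:M (ketbra e) *m P1.
Proof.
move=> [HP HPP] Hs Hf He Hfp Ho [y1 Hy1] [y2 Hy2].
rewrite -Kmx_proj; set K := Kmx e.
set u := K *m f; set w := K *m fp.
have Hu : P1 *m u = u by rewrite /u /K Kmx_apply -Hy1 mulmxA HPP.
have HP2e : P2 = 1%:M - P1 by rewrite -Hs addrAC subrr add0r.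
have Hw : P1 *m w = 0.
  by rewrite /w /K Kmx_apply -Hy2 HP2e mulmxA mulmxBr mulmx1 HPP subrr mul0mx.
have HE : K *m adjmx K = u *m adjmx u + w *m adjmx w.
  have HK : K = K *m (ketbra f + ketbra fp) by rewrite ketbra_compl // mulmx1.
  rewrite {1}HK /ketbra mulmxDr mulmxDl.
  by rewrite /u /w !adjmxM !mulmxA.
have Hu' : adjmx u *m P1 = adjmx u by rewrite {1}HP -adjmxM Hu.
have Hw' : adjmx w *m P1 = 0 by rewrite {1}HP -adjmxM Hw adjmx0.
rewrite HE mulmxDr mulmxDl (mulmxA P1 u) (mulmxA P1 w) Hu Hw mul0mx -(mulmxA u) -(mulmxA w) Hu' Hw' mulmx0.
by [].
Qed.

Lemma kron2_0 (A : 'M[C]_2) : kron2 A 0 = 0.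
Proof. by apply/matrixP => i j; rewrite !mxE mulr0. Qed.

Lemma ext_side (P1 P2 : 'M[C]_4) :
  orthoproj P1 -> orthoproj P2 -> P1 + P2 = 1%:M ->
  (forall e, unitv e -> P1 *m kron2 1%:M (ketbra e) = kron2 1%:M (ketbra e) *m P1 -> False) ->
  extremal (halfTester P1 P2).
Proof.
move=> HP1 HP2 Hs Hno.
have Hh0 : (0 : C) <= 2^-1 by rewrite invr_ge0 ler0n.
split.
  split.
    by move=> i; case: (ord2P i) => -> /=; apply: psdZ => //; exact: orthoproj_psd.
  exists (2^-1 *: 1%:M); split.
    split; first by apply: psdZ => //; exact: (orthoproj_psd (orthoproj1 _)).
    by rewrite mxtraceZ mxtrace1 mulVf // pnatr_eq0.
  by rewrite sum2M /halfTester /= -scalerDr Hs kron2Z kron2_11.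
move=> S U t HS HU Ht Hdec.
have [HSp [rS [[[HrH _] HrT] HsumS]]] := HS.
have [HUp _] := HU.
have /andP[Ht0 Ht1] := Ht.
case: (HP1) => HP1h HPP1; case: (HP2) => HP2h HPP2.
have HS0 : S o20 = P1 *m S o20 *m P1.
  apply: (supp_le (HSp o20) (HUp o20) Ht HP1 (c := 2^-1)); by rewrite -(Hdec o20).
have HS1 : S o21 = P2 *m S o21 *m P2.
  apply: (supp_le (HSp o21) (HUp o21) Ht HP2 (c := 2^-1)); by rewrite -(Hdec o21).
have HP2e : P2 = 1%:M - P1 by rewrite -Hs addrAC subrr add0r.
have P12 : P1 *m P2 = 0 by rewrite HP2e mulmxBr mulmx1 HPP1 subrr.
have P21 : P2 *m P1 = 0 by rewrite HP2e mulmxBl mul1mx HPP1 subrr.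
set D1 := S o20 - 2^-1 *: P1.
set D2 := S o21 - 2^-1 *: P2.
have HD1 : D1 = P1 *m D1 *m P1.
  by rewrite /D1 mulmxBr mulmxBl -HS0 -scalemxAr -scalemxAl !HPP1.
have HD2 : D2 = P2 *m D2 *m P2.
  by rewrite /D2 mulmxBr mulmxBl -HS1 -scalemxAr -scalemxAl !HPP2.
set sg := rS - 2^-1 *: 1%:M.
have Hks : kron2 1%:M sg = D1 + D2.
  rewrite /sg kron2B kron2Z kron2_11 -HsumS sum2M /D1 /D2 -Hs scalerDr.
  by rewrite opprD addrACA.
have HPD1 : P1 *m D1 = D1 by rewrite {1}HD1 !mulmxA HPP1 -HD1.
have HPD2 : P1 *m D2 = 0 by rewrite {1}HD2 !mulmxA P12 !mul0mx.
have HD1P : D1 *m P1 = D1 by rewrite {1}HD1 -mulmxA HPP1 -HD1.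
have HD2P : D2 *m P1 = 0 by rewrite {1}HD2 -mulmxA P21 mulmx0.
have Hcomm : P1 *m kron2 1%:M sg = kron2 1%:M sg *m P1.
  by rewrite Hks mulmxDr mulmxDl HPD1 HPD2 HD1P HD2P !addr0.
case: (eqVneq sg 0) => Hsg.
  have HD1z : D1 = 0 by rewrite -HPD1 -[P1 *m D1]addr0 -HPD2 -mulmxDr -Hks Hsg kron2_0 mulmx0.
  have HPD21 : P2 *m D1 = 0 by rewrite {1}HD1 !mulmxA P21 !mul0mx.
  have HPD22 : P2 *m D2 = D2 by rewrite {1}HD2 !mulmxA HPP2 -HD2.
  have HD2z : D2 = 0 by rewrite -HPD22 -[P2 *m D2]add0r -HPD21 -mulmxDr -Hks Hsg kron2_0 mulmx0.
  have HSi : forall i, S i = halfTester P1 P2 i.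
    move=> i; case: (ord2P i) => -> /=; apply/eqP; rewrite -subr_eq0; apply/eqP.
      exact: HD1z.
    exact: HD2z.
  have Ht1' : 1 - t != 0 by rewrite subr_eq0 eq_sym lt_eqF.
  move=> i; split; first exact: HSi.
  have H := Hdec i; rewrite HSi in H.
  apply: (scalerI Ht1').
  by rewrite [RHS]scalerBl scale1r {1}H addrAC subrr add0r.
exfalso.
have Hsgh : sg = adjmx sg.
  rewrite /sg adjmxB adjmxZ adjmx1 -HrH conj_Creal //.
  by apply: ger0_real.
have Hsgt : \tr sg = 0.
  by rewrite /sg linearB /= mxtraceZ mxtrace1 HrT mulVf ?pnatr_eq0 // subrr.
have [e [c [d [He Hed]]]] := herm_traceless Hsgh Hsgt Hsg.
apply: (Hno e He).
rewrite Hed kron2D !kron2Z kron2_11 mulmxDr mulmxDl -!scalemxAr -!scalemxAl Hcomm.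
by rewrite mulmx1 mul1mx.
Qed.

End Gen.

Theorem mainTheorem12 (C : numClosedFieldType) (P1 P2 : 'M[C]_4) :
  orthoproj P1 -> orthoproj P2 -> \rank P1 = 2%N -> \rank P2 = 2%N ->
  P1 + P2 = kron2 1%:M 1%:M ->
  (~ extremal (halfTester P1 P2) <->
   ((exists v : 'cV[C]_2, unitv v /\ P1 = kron2 1%:M (ketbra v)) \/
    (exists f e fp : 'cV[C]_2,
       unitv f /\ unitv e /\ unitv fp /\ orthv f fp /\
       in_supp P1 (kronv f e) /\ in_supp P2 (kronv fp e)))).
Proof.
move=> HP1 HP2 Hr1 Hr2; rewrite kron2_11 => Hs.
split.
  move=> Hne.
  case: (classic ((exists v : 'cV[C]_2, unitv v /\ P1 = kron2 1%:M (ketbra v)) \/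
    (exists f e fp : 'cV[C]_2,
       unitv f /\ unitv e /\ unitv fp /\ orthv f fp /\
       in_supp P1 (kronv f e) /\ in_supp P2 (kronv fp e)))) => // Hnab.
  exfalso; apply: Hne; apply: ext_side => // e He Hc.
  by apply: Hnab; exact: (ab_of_commute HP1 Hr1 Hs He Hc).
case=> [[v [Hv HPv]] | [f [e [fp [Hf [He [Hfp [Ho [H1 H2]]]]]]]]].
  by apply: (nonext HP1 HP2 Hr1 Hs Hv); rewrite HPv.
exact: (nonext HP1 HP2 Hr1 Hs He (commute_of_b HP1 Hs Hf He Hfp Ho H1 H2)).
Qed.
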